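(* For every $b,c\in\mathbb R$, each of the following systems has an isochronous center at the origin $O$ with zero Urabe function: (i) $\dot x=-y+\frac b3xy+x^2-\frac b3x^3$, $\dot y=x+by^2-2xy-\frac b3x^2-\frac{4b}{3}x^2y+\left(\frac{b^2}{27}+2\right)x^3+\frac b3x^4$; (ii) $\dot x=-y+\frac b4xy+x^2-\frac b4x^3$, $\dot y=x+by^2-2xy-\frac{3b}{8}x^2-\frac{3b}{2}x^2y+\left(\frac{b^2}{16}+2\right)x^3+\left(-\frac{b^3}{256}+\frac b2\right)x^4$; (iii) $\dot x=-y-\frac{45}{8}x^2y+x^2+\frac{45}{8}x^4$, $\dot y=x-2xy-\frac{225}{8}xy^2+\frac{19}{2}x^3+45x^3y$; (iv) $\dot x=-y+\frac{c^2}{2}x^2y+x^2-\frac{c^2}{2}x^4$, $\dot y=x+cy^2-2xy-\frac c2x^2+c^2xy^2-2cx^2y+2x^3-c^2x^3y+cx^4$.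
   Context: For a real planar polynomial system $\dot x=-y+A(x,y)$, $\dot y=x+B(x,y)$, with $A,B$ polynomials having no terms of degree $<2$, the origin $O$ is an isochronous center if there is a punctured neighborhood of $O$ in which every orbit is a closed orbit surrounding $O$ and all these orbits have the same period. Zero Urabe function: write the system as $\dot x=p_0(x)+p_1(x)y$, $\dot y=q_0(x)+q_1(x)y+q_2(x)y^2$ ($p_0(0)=q_0(0)=0$, $p_1(0)\ne0$), where it holds that $-\frac{p_1'p_0}{p_1}+q_1+p_0'-\frac{2q_2p_0}{p_1}\equiv0$. Put $f=-\frac{q_2+p_1'}{p_1}$, $g=-\frac{q_2p_0^2}{p_1}+q_1p_0-p_1q_0$ (the change $z=p_0+p_1y$ gives $\dot x=z$, $\dot z=-g(x)-f(x)z^2$), $F(x)=\int_0^xf$, and $\xi$ near $0$ by $\frac12\xi(x)^2=\int_0^xg(s)e^{2F(s)}ds$, $x\xi(x)>0$ for $x\ne0$. The Urabe function of an isochronous center is the odd analytic $h$ with $\frac{\xi(x)}{1+h(\xi(x))}=g(x)e^{F(x)}$; ''zero Urabe function'' means $h\equiv0$, i.e. $\xi(x)=g(x)e^{F(x)}$ near $0$. *)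

(* Defs.v *)
From Stdlib Require Import Reals Lra ClassicalEpsilon.
Open Scope R_scope.

Definition solution (P Q : R -> R -> R) (x y : R -> R) : Prop :=
  forall t, derivable_pt_lim x t (P (x t) (y t)) /\
            derivable_pt_lim y t (Q (x t) (y t)).

Definition closed_orbit_period (x y : R -> R) (T : R) : Prop :=
  0 < T /\
  (forall t, x (t + T) = x t /\ y (t + T) = y t) /\
  (forall s, 0 < s < T -> (x s, y s) <> (x 0, y 0)).

(* the closed orbit (of period T) surrounds the origin: it avoids O and
   has nonzero winding number around O (continuous polar angle lift). *)
Definition surrounds_origin (x y : R -> R) (T : R) : Prop :=
  (forall t, x t ^ 2 + y t ^ 2 <> 0) /\
  exists theta : R -> R, continuity theta /\
    (forall t, x t = sqrt (x t ^ 2 + y t ^ 2) * cos (theta t) /\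
               y t = sqrt (x t ^ 2 + y t ^ 2) * sin (theta t)) /\
    theta T <> theta 0.

Definition isochronous_center (P Q : R -> R -> R) : Prop :=
  exists eps, 0 < eps /\ exists T, 0 < T /\
    forall a b, 0 < a ^ 2 + b ^ 2 < eps ^ 2 ->
      exists x y : R -> R, solution P Q x y /\ x 0 = a /\ y 0 = b /\
        closed_orbit_period x y T /\ surrounds_origin x y T.

(* Total version of the (oriented) Riemann integral \int_a^b f. *)
Definition Rint (f : R -> R) (a b : R) : R :=
  epsilon (inhabits 0)
    (fun v => exists pr : Riemann_integrable f a b, RiemannInt pr = v).

(* Zero Urabe function for the system written as
   x' = p0(x) + p1(x) y,  y' = q0(x) + q1(x) y + q2(x) y^2. *)
Definition zero_Urabe (p0 p1 q0 q1 q2 : R -> R) : Prop :=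
  exists dp0 dp1 : R -> R,
    (forall x, derivable_pt_lim p0 x (dp0 x)) /\
    (forall x, derivable_pt_lim p1 x (dp1 x)) /\
    (forall x, p1 x <> 0 ->
       - dp1 x * p0 x / p1 x + q1 x + dp0 x - 2 * q2 x * p0 x / p1 x = 0) /\
    let f := fun x => - (q2 x + dp1 x) / p1 x in
    let g := fun x => - q2 x * p0 x ^ 2 / p1 x + q1 x * p0 x - p1 x * q0 x in
    let F := fun x => Rint f 0 x in
    exists delta, 0 < delta /\
      forall x, Rabs x < delta ->
        inhabited (Riemann_integrable f 0 x) /\
        inhabited (Riemann_integrable (fun s => g s * exp (2 * F s)) 0 x) /\
        (* xi(x) := g(x) e^{F(x)} satisfies the defining relations of xi *)
        / 2 * (g x * exp (F x)) ^ 2 = Rint (fun s => g s * exp (2 * F s)) 0 x /\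
        (x <> 0 -> x * (g x * exp (F x)) > 0).

Definition iso_center_zero_Urabe (P Q : R -> R -> R) : Prop :=
  isochronous_center P Q /\
  exists p0 p1 q0 q1 q2 : R -> R,
    (forall x y, P x y = p0 x + p1 x * y) /\
    (forall x y, Q x y = q0 x + q1 x * y + q2 x * y ^ 2) /\
    p0 0 = 0 /\ q0 0 = 0 /\ p1 0 <> 0 /\
    zero_Urabe p0 p1 q0 q1 q2.

Definition P1 (b : R) (x y : R) : R := - y + b / 3 * x * y + x ^ 2 - b / 3 * x ^ 3.
Definition Q1 (b : R) (x y : R) : R :=
  x + b * y ^ 2 - 2 * x * y - b / 3 * x ^ 2 - 4 * b / 3 * x ^ 2 * y
  + (b ^ 2 / 27 + 2) * x ^ 3 + b / 3 * x ^ 4.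

Definition P2 (b : R) (x y : R) : R := - y + b / 4 * x * y + x ^ 2 - b / 4 * x ^ 3.
Definition Q2 (b : R) (x y : R) : R :=
  x + b * y ^ 2 - 2 * x * y - 3 * b / 8 * x ^ 2 - 3 * b / 2 * x ^ 2 * y
  + (b ^ 2 / 16 + 2) * x ^ 3 + (- b ^ 3 / 256 + b / 2) * x ^ 4.

Definition P3 (x y : R) : R := - y - 45 / 8 * x ^ 2 * y + x ^ 2 + 45 / 8 * x ^ 4.
Definition Q3 (x y : R) : R :=
  x - 2 * x * y - 225 / 8 * x * y ^ 2 + 19 / 2 * x ^ 3 + 45 * x ^ 3 * y.

Definition P4 (c : R) (x y : R) : R :=
  - y + c ^ 2 / 2 * x ^ 2 * y + x ^ 2 - c ^ 2 / 2 * x ^ 4.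
Definition Q4 (c : R) (x y : R) : R :=
  x + c * y ^ 2 - 2 * x * y - c / 2 * x ^ 2 + c ^ 2 * x * y ^ 2
  - 2 * c * x ^ 2 * y + 2 * x ^ 3 - c ^ 2 * x ^ 3 * y + c * x ^ 4.

(* Main.v *)
Require Import Defs.
From Stdlib Require Import Reals Lra ClassicalEpsilon Ranalysis5 MVT RiemannInt Ratan FunctionalExtensionality.
Open Scope R_scope.

Lemma FTC_loc (k Gp : R -> R) (a b : R) (h : a <= b)
  (C0 : forall x, a <= x <= b -> continuity_pt k x)
  (D : forall x, a <= x <= b -> derivable_pt_lim Gp x (k x))
  (pr : Riemann_integrable k a b) : RiemannInt pr = Gp b - Gp a.
Proof.
  rewrite (RiemannInt_P20 h (FTC_P1 h C0) pr).
  assert (H1 := RiemannInt_P29 h C0).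
  assert (H2 : antiderivative k Gp a b).
  { split; [|exact h]. intros x Hx.
    exists (exist _ (k x) (D x Hx)). simpl. reflexivity. }
  destruct (antiderivative_Ucte k _ _ _ _ H1 H2) as [C HC].
  rewrite (HC b) by lra. rewrite (HC a) by lra. ring.
Qed.

Lemma Rint_FTC (f k Gp : R -> R) (a b : R) :
  (forall x, Rmin a b <= x <= Rmax a b -> f x = k x) ->
  (forall x, Rmin a b <= x <= Rmax a b -> continuity_pt k x) ->
  (forall x, Rmin a b <= x <= Rmax a b -> derivable_pt_lim Gp x (k x)) ->
  inhabited (Riemann_integrable f a b) /\ Rint f a b = Gp b - Gp a.
Proof.
  intros Hfk Hc Hd.
  assert (Hfk' : forall x, Rmin a b <= x <= Rmax a b -> k x = f x)
    by (intros; symmetry; auto).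
  assert (main : exists pr : Riemann_integrable f a b, RiemannInt pr = Gp b - Gp a).
  { destruct (Rle_dec a b) as [hab|hab].
    - assert (mn : Rmin a b = a) by (apply Rmin_left; lra).
      assert (mx : Rmax a b = b) by (apply Rmax_right; lra).
      rewrite mn, mx in Hfk, Hc, Hd, Hfk'.
      pose (prk := continuity_implies_RiemannInt hab Hc).
      assert (prf : Riemann_integrable f a b).
      { eapply Riemann_integrable_ext; [|exact prk].
        rewrite Rmin_left, Rmax_right by lra. exact Hfk'. }
      exists prf. rewrite (RiemannInt_P18 prf prk hab).
      + apply FTC_loc; auto.
      + intros; apply Hfk; lra.
    - assert (hba : b <= a) by lra.
      assert (mn : Rmin a b = b) by (apply Rmin_right; lra).
      assert (mx : Rmax a b = a) by (apply Rmax_left; lra).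
      rewrite mn, mx in Hfk, Hc, Hd, Hfk'.
      pose (prk := continuity_implies_RiemannInt hba Hc).
      assert (prf : Riemann_integrable f b a).
      { eapply Riemann_integrable_ext; [|exact prk].
        rewrite Rmin_left, Rmax_right by lra. exact Hfk'. }
      exists (RiemannInt_P1 prf).
      rewrite (RiemannInt_P8 (RiemannInt_P1 prf) prf).
      rewrite (RiemannInt_P18 prf prk hba).
      + rewrite (FTC_loc k Gp b a hba Hc Hd prk). ring.
      + intros; apply Hfk; lra. }
  destruct main as [pr Hpr]. split; [exact (inhabits pr)|].
  unfold Rint.
  destruct (epsilon_spec (inhabits 0)
    (fun v => exists pr : Riemann_integrable f a b, RiemannInt pr = v)
    (ex_intro _ (Gp b - Gp a) (ex_intro _ pr Hpr))) as [pr' Hpr'].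
  rewrite <- Hpr', <- Hpr. apply RiemannInt_P5.
Qed.

Lemma inv_fun (xi E : R -> R) (d : R) : 0 < d ->
  (forall x, -d <= x <= d -> derivable_pt_lim xi x (E x)) ->
  (forall x, -d <= x <= d -> 0 < E x) ->
  exists X : R -> R,
    (forall u, xi (-d) <= u <= xi d -> -d <= X u <= d /\ xi (X u) = u) /\
    (forall x, -d <= x <= d -> X (xi x) = x) /\
    (forall u, xi (-d) < u < xi d -> derivable_pt_lim X u (/ E (X u))).
Proof.
  intros hd Hder Hpos.
  assert (incr : forall x y, -d <= x -> x < y -> y <= d -> xi x < xi y).
  { intros x y h1 h2 h3.
    destruct (MVT_cor2 xi E x y h2) as [c [Hc1 Hc2]].
    { intros c hc; apply Hder; lra. }
    assert (0 < E c) by (apply Hpos; lra).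
    assert (0 < E c * (y - x)) by (apply Rmult_lt_0_compat; lra). lra. }
  assert (Hcont : forall x, -d <= x <= d -> continuity_pt xi x).
  { intros x hx. apply derivable_continuous_pt. exists (E x). apply Hder; exact hx. }
  assert (hdd : -d < d) by lra.
  pose (X := fun u => match Rle_dec (xi (-d)) u with
     | left h1 => match Rle_dec u (xi d) with
         | left h2 => proj1_sig (f_interv_is_interv xi (-d) d u hdd (conj h1 h2) Hcont)
         | right _ => 0 end
     | right _ => 0 end).
  assert (HX : forall u, xi (-d) <= u <= xi d -> -d <= X u <= d /\ xi (X u) = u).
  { intros u [h1 h2]. unfold X.
    destruct (Rle_dec (xi (-d)) u) as [h1'|h1']; [|lra].
    destruct (Rle_dec u (xi d)) as [h2'|h2']; [|lra].
    destruct (f_interv_is_interv xi (-d) d u hdd (conj h1' h2') Hcont) as [x Hx].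
    simpl. exact Hx. }
  assert (Hinj : forall x y, -d <= x <= d -> -d <= y <= d -> xi x = xi y -> x = y).
  { intros x y hx hy e. destruct (Rtotal_order x y) as [l|[l|l]]; auto.
    - specialize (incr x y ltac:(lra) l ltac:(lra)). lra.
    - specialize (incr y x ltac:(lra) l ltac:(lra)). lra. }
  assert (Hrange : forall x, -d <= x <= d -> xi (-d) <= xi x <= xi d).
  { intros x hx. split.
    - destruct (Req_dec x (-d)) as [e|ne]; [subst; lra|].
      left; apply incr; lra.
    - destruct (Req_dec x d) as [e|ne]; [subst; lra|].
      left; apply incr; lra. }
  assert (HL : forall x, -d <= x <= d -> X (xi x) = x).
  { intros x hx. destruct (HX (xi x) (Hrange x hx)) as [h1 h2].
    apply Hinj; auto. }
  exists X. split; [exact HX|]. split; [exact HL|].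
  intros u hu.
  assert (Xlb : X (xi (-d)) = -d) by (apply HL; lra).
  assert (Xub : X (xi d) = d) by (apply HL; lra).
  assert (Prf : forall a, X (xi (-d)) <= a <= X (xi d) -> derivable_pt xi a).
  { intros a ha. rewrite Xlb, Xub in ha. exists (E a). apply Hder; exact ha. }
  assert (Prg : continuity_pt X u).
  { apply (continuity_pt_recip_interv xi X (-d) d hdd).
    - intros; apply incr; auto.
    - intros x h1 h2. unfold comp, id. apply HX; lra.
    - intros x h1 h2. apply HX; lra.
    - exact Hcont.
    - exact hu. }
  assert (hlu : xi (-d) < xi d) by (apply incr; lra).
  destruct (HX u ltac:(lra)) as [hXu hXu2].
  assert (Prg_incr : X (xi (-d)) <= X u <= X (xi d)) by (rewrite Xlb, Xub; exact hXu).
  assert (hdp : derive_pt xi (X u) (Prf (X u) Prg_incr) = E (X u)).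
  { apply derive_pt_eq_0. apply Hder. exact hXu. }
  assert (R := derivable_pt_lim_recip_interv xi X (xi (-d)) (xi d) u Prf Prg hlu hu Prg_incr).
  rewrite hdp in R. 
  replace (/ E (X u)) with (1 / E (X u)) by (unfold Rdiv; ring).
  apply R.
  - intros x hx. unfold comp, id. apply HX; exact hx.
  - specialize (Hpos (X u) hXu). lra.
Qed.

Lemma Rdiv_le_0_compat a b : 0 <= a -> 0 < b -> 0 <= a / b.
Proof. intros; apply Rmult_le_pos; [lra|left; apply Rinv_0_lt_compat; lra]. Qed.

Lemma trig1 t : sin t ^ 2 + cos t ^ 2 = 1.
Proof. pose proof (sin2_cos2 t). unfold Rsqr in H. nra. Qed.

Lemma polar u0 v0 : 0 < u0^2+v0^2 ->
  exists phi, u0 = sqrt(u0^2+v0^2) * cos phi /\ v0 = sqrt(u0^2+v0^2) * sin phi.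
Proof.
  intros h. set (r := sqrt (u0^2+v0^2)).
  assert (hr : 0 < r) by (apply sqrt_lt_R0; lra).
  assert (hr2 : r * r = u0^2+v0^2) by (apply sqrt_sqrt; lra).
  set (c := u0 / r).
  assert (hc : -1 <= c <= 1).
  { unfold c. split.
    - apply (Rmult_le_reg_r r); [lra|]. field_simplify; [|lra]. nra.
    - apply (Rmult_le_reg_r r); [lra|]. field_simplify; [|lra]. nra. }
  assert (hs : sqrt (1 - c²) = Rabs v0 / r).
  { apply sqrt_lem_1.
    - unfold Rsqr. nra.
    - apply Rdiv_le_0_compat; [apply Rabs_pos|lra].
    - assert (ha : Rabs v0 * Rabs v0 = v0 * v0).
      { rewrite <- Rabs_mult. apply Rabs_pos_eq. nra. }
      unfold c, Rsqr.
      replace (Rabs v0 / r * (Rabs v0 / r)) with ((Rabs v0 * Rabs v0)/(r*r)) by (field; lra).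
      rewrite ha. replace (1 - u0 / r * (u0 / r)) with ((r*r - u0*u0)/(r*r)) by (field; lra).
      rewrite hr2. f_equal; ring. }
  destruct (Rle_dec 0 v0) as [hv|hv].
  - exists (acos c). rewrite cos_acos, sin_acos by exact hc. rewrite hs.
    rewrite Rabs_pos_eq by exact hv. unfold c. split; field; lra.
  - exists (- acos c). rewrite cos_neg, sin_neg, cos_acos, sin_acos by exact hc. rewrite hs.
    rewrite Rabs_left by lra. unfold c. split; field; lra.
Qed.

Lemma cos_ne1 s : 0 < s < 2*PI -> cos s <> 1.
Proof.
  intros hs e. replace s with (2 * (s/2)) in e by field.
  rewrite cos_2a_sin in e.
  assert (0 < sin (s/2)) by (apply sin_gt_0; lra). nra.
Qed.

Lemma cont_atan : forall x, continuity_pt atan x.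
Proof. intros x. apply derivable_continuous_pt. apply derivable_pt_atan. Qed.

Lemma lift (x y : R -> R) (phi : R) : continuity x -> continuity y ->
 (forall t, 0 < x t * cos (t - phi) + y t * sin (t - phi)) ->
 (forall t, x (t + 2*PI) = x t /\ y (t+2*PI) = y t) ->
 exists theta : R -> R, continuity theta /\
    (forall t, x t = sqrt (x t ^ 2 + y t ^ 2) * cos (theta t) /\
               y t = sqrt (x t ^ 2 + y t ^ 2) * sin (theta t)) /\
    theta (2*PI) <> theta 0.
Proof.
  intros cx cy hD hper.
  set (D := fun t => x t * cos (t - phi) + y t * sin (t - phi)).
  set (C := fun t => - x t * sin (t - phi) + y t * cos (t - phi)).
  exists (fun t => (t - phi) + atan (C t / D t)).
  assert (ca : continuity (fun t => t - phi)).
  { apply continuity_minus; [apply derivable_continuous, derivable_id| apply continuity_const; intros ? ?; reflexivity]. }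
  assert (cc : continuity (fun t => cos (t - phi))).
  { intros t. apply (continuity_pt_comp (fun t => t - phi) cos). apply ca. apply continuity_cos. }
  assert (cs : continuity (fun t => sin (t - phi))).
  { intros t. apply (continuity_pt_comp (fun t => t - phi) sin). apply ca. apply continuity_sin. }
  split; [|split].
  - intros t. apply continuity_pt_plus; [apply ca|].
    apply (continuity_pt_comp (fun t => C t / D t) atan); [|apply cont_atan].
    apply continuity_pt_div.
    + unfold C. apply continuity_pt_plus; apply continuity_pt_mult.
      * apply continuity_pt_opp, cx.
      * apply cs.
      * apply cy.
      * apply cc.
    + unfold D. apply continuity_pt_plus; apply continuity_pt_mult; auto.
    + specialize (hD t). fold (D t) in hD. lra.
  - intros t. specialize (hD t). fold (D t) in hD.
    set (a := t - phi). fold a in hD.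
    set (z := C t / D t).
    assert (t1 := trig1 a).
    assert (hDC : D t ^ 2 + C t ^ 2 = x t ^ 2 + y t ^ 2).
    { unfold D, C. fold a. nra. }
    assert (hS : 0 < x t ^ 2 + y t ^ 2) by nra.
    set (S := sqrt (x t ^ 2 + y t ^ 2)).
    assert (hS1 : 0 < S) by (apply sqrt_lt_R0; lra).
    assert (hS2 : S * S = x t ^ 2 + y t ^ 2) by (apply sqrt_sqrt; lra).
    assert (hq : sqrt (1 + z²) = S / D t).
    { apply sqrt_lem_1.
      - unfold Rsqr; nra.
      - apply Rdiv_le_0_compat; lra.
      - unfold z, Rsqr.
        replace (S / D t * (S / D t)) with ((S*S)/(D t * D t)) by (field; lra).
        rewrite hS2, <- hDC. field. lra. }
    rewrite cos_plus, sin_plus, cos_atan, sin_atan, hq.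
    split.
    + replace (S * (cos a * (1 / (S / D t)) - sin a * (z / (S / D t))))
        with (D t * cos a - C t * sin a) by (unfold z; field; lra).
      unfold D, C. cbv beta. fold a.
      replace (x t) with (x t * (sin a ^ 2 + cos a ^ 2)) at 1 by (rewrite t1; ring). ring.
    + replace (S * (sin a * (1 / (S / D t)) + cos a * (z / (S / D t))))
        with (D t * sin a + C t * cos a) by (unfold z; field; lra).
      unfold D, C. cbv beta. fold a.
      replace (y t) with (y t * (sin a ^ 2 + cos a ^ 2)) at 1 by (rewrite t1; ring). ring.
  - intros e. destruct (hper 0) as [h1 h2].
    rewrite Rplus_0_l in h1, h2.
    assert (ec : cos (2*PI - phi) = cos (0 - phi)).
    { replace (2*PI - phi) with ((0 - phi) + 2 * INR 1 * PI) by (simpl; ring).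
      apply cos_period. }
    assert (es : sin (2*PI - phi) = sin (0 - phi)).
    { replace (2*PI - phi) with ((0 - phi) + 2 * INR 1 * PI) by (simpl; ring).
      apply sin_period. }
    unfold C, D in e. rewrite h1, h2, ec, es in e.
    assert (PI > 0) by apply PI_RGT_0. lra.
Qed.

Section DL.
Implicit Types (f g : R -> R) (x a b : R).
Lemma dl_eq f x a b : derivable_pt_lim f x a -> a = b -> derivable_pt_lim f x b.
Proof. intros h e; subst; exact h. Qed.
Lemma dl_plus f g x a b : derivable_pt_lim f x a -> derivable_pt_lim g x b ->
  derivable_pt_lim (fun y => f y + g y) x (a + b).
Proof. intros; apply (derivable_pt_lim_plus f g); auto. Qed.
Lemma dl_minus f g x a b : derivable_pt_lim f x a -> derivable_pt_lim g x b ->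
  derivable_pt_lim (fun y => f y - g y) x (a - b).
Proof. intros; apply (derivable_pt_lim_minus f g); auto. Qed.
Lemma dl_mult f g x a b : derivable_pt_lim f x a -> derivable_pt_lim g x b ->
  derivable_pt_lim (fun y => f y * g y) x (a * g x + f x * b).
Proof. intros; apply (derivable_pt_lim_mult f g); auto. Qed.
Lemma dl_div f g x a b : derivable_pt_lim f x a -> derivable_pt_lim g x b -> g x <> 0 ->
  derivable_pt_lim (fun y => f y / g y) x ((a * g x - b * f x) / (g x ^ 2)).
Proof. intros h1 h2 h3. eapply dl_eq. { exact (derivable_pt_lim_div f g x a b h1 h2 h3). }
  unfold Rsqr; field; auto. Qed.
Lemma dl_opp f x a : derivable_pt_lim f x a -> derivable_pt_lim (fun y => - f y) x (- a).
Proof. intros; apply (derivable_pt_lim_opp f); auto. Qed.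
Lemma dl_const c x : derivable_pt_lim (fun _ => c) x 0.
Proof. apply (derivable_pt_lim_const c). Qed.
Lemma dl_id x : derivable_pt_lim (fun y => y) x 1.
Proof. apply derivable_pt_lim_id. Qed.
Lemma dl_comp f g x a b : derivable_pt_lim g x a -> derivable_pt_lim f (g x) b ->
  derivable_pt_lim (fun y => f (g y)) x (b * a).
Proof. intros; apply (derivable_pt_lim_comp g f); auto. Qed.
Lemma dl_pow f x a n : derivable_pt_lim f x a ->
  derivable_pt_lim (fun y => f y ^ n) x (INR n * f x ^ pred n * a).
Proof. intros h. apply (dl_comp (fun y => y ^ n) f x a); auto. apply derivable_pt_lim_pow. Qed.
Lemma dl_exp f x a : derivable_pt_lim f x a -> derivable_pt_lim (fun y => exp (f y)) x (exp (f x) * a).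
Proof. intros h. apply (dl_comp exp f x a); auto. apply derivable_pt_lim_exp. Qed.
Lemma dl_ln f x a : derivable_pt_lim f x a -> 0 < f x -> derivable_pt_lim (fun y => ln (f y)) x (/ f x * a).
Proof. intros h h'. apply (dl_comp ln f x a); auto. apply derivable_pt_lim_ln; auto. Qed.
Lemma dl_sin f x a : derivable_pt_lim f x a -> derivable_pt_lim (fun y => sin (f y)) x (cos (f x) * a).
Proof. intros h. apply (dl_comp sin f x a); auto. apply derivable_pt_lim_sin. Qed.
Lemma dl_cos f x a : derivable_pt_lim f x a -> derivable_pt_lim (fun y => cos (f y)) x (- sin (f x) * a).
Proof. intros h. apply (dl_comp cos f x a); auto. apply derivable_pt_lim_cos. Qed.
End DL.

Ltac dstep := first
  [ apply dl_const | apply dl_id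
  | eapply dl_plus | eapply dl_minus | eapply dl_div | eapply dl_mult | eapply dl_opp
  | eapply dl_pow | eapply dl_exp | eapply dl_sin | eapply dl_cos
  | eapply dl_ln ].
Ltac dauto := eapply dl_eq; [ repeat dstep | cbv beta ].



Definition Gf (p0 p1 q0 q1 q2 : R -> R) x := - q2 x * p0 x ^ 2 / p1 x + q1 x * p0 x - p1 x * q0 x.
Definition ff (p1 q2 dp1 : R -> R) x := - (q2 x + dp1 x) / p1 x.
Definition dGf (p0 p1 q0 q1 q2 dp0 dp1 dq0 dq1 dq2 : R -> R) x :=
  -(dq2 x * p0 x ^ 2 + q2 x * (2 * p0 x * dp0 x)) / p1 x + q2 x * p0 x ^ 2 * dp1 x / p1 x ^ 2
      + (dq1 x * p0 x + q1 x * dp0 x) - (dp1 x * q0 x + p1 x * dq0 x).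

Lemma dG_lim p0 p1 q0 q1 q2 dp0 dp1 dq0 dq1 dq2 x :
  derivable_pt_lim p0 x (dp0 x) -> derivable_pt_lim p1 x (dp1 x) ->
  derivable_pt_lim q0 x (dq0 x) -> derivable_pt_lim q1 x (dq1 x) ->
  derivable_pt_lim q2 x (dq2 x) -> p1 x <> 0 ->
  derivable_pt_lim (Gf p0 p1 q0 q1 q2) x (dGf p0 p1 q0 q1 q2 dp0 dp1 dq0 dq1 dq2 x).
Proof.
  intros h0 h1 h2 h3 h4 hp. unfold Gf, dGf.
  eapply dl_eq.
  { apply dl_minus; [apply dl_plus|apply dl_mult; eauto].
    - apply dl_div; [|exact h1|exact hp]. apply dl_mult; [apply dl_opp; exact h4|].
      apply dl_pow; exact h0.
    - apply dl_mult; eauto. }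
  simpl. field. exact hp.
Qed.

Lemma abs_le a b : Rabs a <= b -> -b <= a <= b.
Proof. unfold Rabs; destruct (Rcase_abs a); intros; lra. Qed.
Lemma abs_le_intro a b : -b <= a <= b -> Rabs a <= b.
Proof. unfold Rabs; destruct (Rcase_abs a); intros; lra. Qed.

Lemma exp_bounds t : Rabs t <= 1/4 -> 3/4 <= exp t <= 4/3.
Proof.
  intros h. apply abs_le in h. split.
  - pose proof (exp_ineq1_le t). lra.
  - pose proof (exp_ineq1_le (-t)). rewrite exp_Ropp in H.
    pose proof (exp_pos t).
    assert (1 - t <= / exp t) by lra.
    apply (Rmult_le_compat_r (exp t)) in H1; [|lra].
    rewrite Rinv_l in H1 by lra. nra.
Qed.


Lemma mm_abs s t : Rmin 0 s <= t <= Rmax 0 s -> Rabs t <= Rabs s.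
Proof.
  unfold Rmin, Rmax. destruct (Rle_dec 0 s); intros h;
  unfold Rabs; destruct (Rcase_abs t); destruct (Rcase_abs s); lra.
Qed.

Lemma gen_urabe p0 p1 q0 q1 q2 dp0 dp1 dq0 dq1 dq2 Fe d :
  0 < d ->
  (forall x, derivable_pt_lim p0 x (dp0 x)) ->
  (forall x, derivable_pt_lim p1 x (dp1 x)) ->
  (forall x, derivable_pt_lim q0 x (dq0 x)) ->
  (forall x, derivable_pt_lim q1 x (dq1 x)) ->
  (forall x, derivable_pt_lim q2 x (dq2 x)) ->
  (forall x, p1 x <> 0 -> - dp1 x * p0 x / p1 x + q1 x + dp0 x - 2 * q2 x * p0 x / p1 x = 0) ->
  p0 0 = 0 -> q0 0 = 0 -> Fe 0 = 0 ->
  (forall x, Rabs x <= d -> derivable_pt_lim Fe x (ff p1 q2 dp1 x)) ->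
  (forall x, Rabs x <= d -> continuity_pt (ff p1 q2 dp1) x) ->
  (forall x, Rabs x <= d -> dGf p0 p1 q0 q1 q2 dp0 dp1 dq0 dq1 dq2 x
                            + Gf p0 p1 q0 q1 q2 x * ff p1 q2 dp1 x = 1) ->
  (forall x, Rabs x <= d -> p1 x < 0) ->
  (forall x, Rabs x <= d -> 2/3 * x ^ 2 <= x * Gf p0 p1 q0 q1 q2 x) ->
  zero_Urabe p0 p1 q0 q1 q2.
Proof.
  intros hd Hp0 Hp1 Hq0 Hq1 Hq2 Hcond hp00 hq00 hF0 HFd Hfc HGd Hp1n HGb.
  exists dp0, dp1. split; [exact Hp0|]. split; [exact Hp1|]. split; [exact Hcond|].
  intros f g F.
  set (xi := fun s => Gf p0 p1 q0 q1 q2 s * exp (Fe s)).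
  assert (hxi : forall s, Rabs s <= d -> derivable_pt_lim xi s (exp (Fe s))).
  { intros s hs. unfold xi. eapply dl_eq.
    { apply dl_mult; [apply dG_lim; auto; specialize (Hp1n s hs); lra|].
      apply dl_exp. apply HFd. exact hs. }
    transitivity ((dGf p0 p1 q0 q1 q2 dp0 dp1 dq0 dq1 dq2 s
                            + Gf p0 p1 q0 q1 q2 s * ff p1 q2 dp1 s) * exp (Fe s)); [ring|].
    rewrite (HGd s hs). ring. }
  assert (hRF : forall s, Rabs s <= d ->
     inhabited (Riemann_integrable f 0 s) /\ Rint f 0 s = Fe s).
  { intros s hs. destruct (Rint_FTC f f Fe 0 s) as [h1 h2].
    - reflexivity.
    - intros t ht. apply Hfc. pose proof (mm_abs s t ht). lra.
    - intros t ht. apply HFd. pose proof (mm_abs s t ht). lra.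
    - split; [exact h1|]. rewrite h2, hF0. ring. }
  exists d. split; [exact hd|]. intros x hx.
  destruct (hRF x ltac:(lra)) as [hi1 hi2].
  assert (hI := Rint_FTC (fun s => g s * exp (2 * F s)) (fun s => xi s * exp (Fe s))
                 (fun s => / 2 * xi s ^ 2) 0 x).
  destruct hI as [hI1 hI2].
  - intros t ht. assert (ht' : Rabs t <= d) by (pose proof (mm_abs x t ht); lra).
    unfold F. rewrite (proj2 (hRF t ht')). unfold xi, g.
    replace (2 * Fe t) with (Fe t + Fe t) by ring. rewrite exp_plus. unfold Gf. ring.
  - intros t ht. assert (ht' : Rabs t <= d) by (pose proof (mm_abs x t ht); lra).
    apply continuity_pt_mult.
    + apply derivable_continuous_pt. exists (exp (Fe t)). apply hxi; exact ht'.
    + apply derivable_continuous_pt. exists (exp (Fe t) * ff p1 q2 dp1 t).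
      apply dl_exp. apply HFd; exact ht'.
  - intros t ht. assert (ht' : Rabs t <= d) by (pose proof (mm_abs x t ht); lra).
    eapply dl_eq. { apply (derivable_pt_lim_scal (fun s => xi s ^ 2)). apply dl_pow. apply hxi; exact ht'. }
    simpl. field.
  - split; [exact hi1|]. split; [exact hI1|]. split.
    + rewrite hI2. unfold F. rewrite hi2.
      assert (xi 0 = 0).
      { unfold xi, Gf. rewrite hp00, hq00. unfold Rdiv. ring. }
      rewrite H. unfold xi, g, Gf. ring.
    + intros hx0. unfold F. rewrite hi2. specialize (HGb x ltac:(lra)).
      assert (0 < x ^ 2) by (apply pow_lt_sq; auto) || nra.
      pose proof (exp_pos (Fe x)). unfold g. unfold Gf in HGb.
      apply Rlt_gt. 
      replace (x * ((- q2 x * p0 x ^ 2 / p1 x + q1 x * p0 x - p1 x * q0 x) * exp (Fe x)))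
        with ((x * (- q2 x * p0 x ^ 2 / p1 x + q1 x * p0 x - p1 x * q0 x)) * exp (Fe x)) by ring.
      apply Rmult_lt_0_compat; lra.
Qed.


Lemma pos_bound x y Ev P0 P1 Xi : Rabs x <= 1/32 -> 3/4 <= Ev <= 4/3 -> -2 <= P1 <= -1/2 ->
  Rabs P0 <= 2 * x ^ 2 -> x ^ 2 / 2 <= x * Xi -> 0 < x ^ 2 + y ^ 2 ->
  0 < x * Xi - y * (Ev * (P0 + P1 * y)).
Proof.
  intros hx hE hP1 hP0 hXi hxy.
  assert (hA : Rabs (y * Ev * P0) <= Rabs y * (4/3) * (2 * x ^ 2)).
  { rewrite !Rabs_mult. rewrite (Rabs_pos_eq Ev) by lra.
    pose proof (Rabs_pos y). pose proof (Rabs_pos P0).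
    assert (0 <= Rabs y * Ev) by nra.
    apply Rle_trans with (Rabs y * Ev * (2 * x ^ 2)).
    - apply Rmult_le_compat_l; lra.
    - assert (0 <= 2 * x ^ 2) by nra.
      apply Rmult_le_compat_r; [lra|]. apply Rmult_le_compat_l; lra. }
  apply abs_le in hA.
  assert (hx2 : x ^ 2 = Rabs x * Rabs x).
  { rewrite <- Rabs_mult. rewrite Rabs_pos_eq; [ring| nra]. }
  assert (hy2 : y ^ 2 = Rabs y * Rabs y).
  { rewrite <- Rabs_mult. rewrite Rabs_pos_eq; [ring| nra]. }
  pose proof (Rabs_pos x). pose proof (Rabs_pos y).
  assert (Rabs y * (4/3) * (2 * x ^ 2) <= (x^2 + y^2) / 24).
  { rewrite hx2, hy2.
    assert (0 <= (1/32 - Rabs x) * (Rabs x * Rabs y)) by (apply Rmult_le_pos; [lra|apply Rmult_le_pos; assumption]).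
    assert (0 <= (Rabs x - Rabs y) ^ 2) by (apply pow2_ge_0). nra. }
  assert (0 <= (Ev - 3/4) * (-P1 - 1/2)) by (apply Rmult_le_pos; lra).
  assert (- (Ev * P1) >= 3/8) by nra.
  assert (0 <= y ^ 2) by nra.
  assert (- (Ev * P1) * y ^ 2 >= 3/8 * y ^ 2) by nra.
  nra.
Qed.

Lemma cos_2PI_plus t : cos (t + 2 * PI) = cos t.
Proof. replace (t + 2*PI) with (t + 2 * INR 1 * PI) by (simpl; ring). apply cos_period. Qed.
Lemma sin_2PI_plus t : sin (t + 2 * PI) = sin t.
Proof. replace (t + 2*PI) with (t + 2 * INR 1 * PI) by (simpl; ring). apply sin_period. Qed.

Lemma abs_cs u0 v0 t : Rabs (u0 * cos t + v0 * sin t) <= Rabs u0 + Rabs v0.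
Proof.
  eapply Rle_trans; [apply Rabs_triang|]. rewrite !Rabs_mult.
  pose proof (COS_bound t). pose proof (SIN_bound t).
  assert (Rabs (cos t) <= 1) by (apply abs_le_intro; lra).
  assert (Rabs (sin t) <= 1) by (apply abs_le_intro; lra).
  pose proof (Rabs_pos u0). pose proof (Rabs_pos v0).
  pose proof (Rabs_pos (cos t)). pose proof (Rabs_pos (sin t)). nra.
Qed.

Lemma abs_x_le x u : x ^ 2 / 2 <= x * u -> Rabs x <= 2 * Rabs u.
Proof.
  intros h. unfold Rabs; destruct (Rcase_abs x); destruct (Rcase_abs u); nra.
Qed.


Lemma gen_iso p0 p1 q0 q1 q2 dp0 dp1 dq0 dq1 dq2 Fe d :
  0 < d <= 1/16 ->
  (forall x, derivable_pt_lim p0 x (dp0 x)) ->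
  (forall x, derivable_pt_lim p1 x (dp1 x)) ->
  (forall x, derivable_pt_lim q0 x (dq0 x)) ->
  (forall x, derivable_pt_lim q1 x (dq1 x)) ->
  (forall x, derivable_pt_lim q2 x (dq2 x)) ->
  (forall x, p1 x <> 0 -> - dp1 x * p0 x / p1 x + q1 x + dp0 x - 2 * q2 x * p0 x / p1 x = 0) ->
  p0 0 = 0 -> q0 0 = 0 ->
  (forall x, Rabs x <= d -> derivable_pt_lim Fe x (ff p1 q2 dp1 x)) ->
  (forall x, Rabs x <= d -> dGf p0 p1 q0 q1 q2 dp0 dp1 dq0 dq1 dq2 x
                            + Gf p0 p1 q0 q1 q2 x * ff p1 q2 dp1 x = 1) ->
  (forall x, Rabs x <= d -> -2 <= p1 x <= -1/2) ->
  (forall x, Rabs x <= d -> Rabs (p0 x) <= 2 * x ^ 2) ->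
  (forall x, Rabs x <= d -> Rabs (Fe x) <= 1/4) ->
  (forall x, Rabs x <= d -> 2/3 * x ^ 2 <= x * Gf p0 p1 q0 q1 q2 x
       /\ Rabs (Gf p0 p1 q0 q1 q2 x) <= 3/2 * Rabs x) ->
  isochronous_center (fun x y => p0 x + p1 x * y) (fun x y => q0 x + q1 x * y + q2 x * y ^ 2).
Proof.
  intros hd Hp0 Hp1 Hq0 Hq1 Hq2 Hcond hp00 hq00 HFd HGd Hp1b Hp0b HFb HGb.
  set (E := fun s => exp (Fe s)).
  set (G := Gf p0 p1 q0 q1 q2).
  set (xi := fun s => G s * E s).
  assert (hE : forall s, Rabs s <= d -> 3/4 <= E s <= 4/3).
  { intros s hs. apply exp_bounds. apply HFb; exact hs. }
  assert (hp1ne : forall s, Rabs s <= d -> p1 s <> 0).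
  { intros s hs. specialize (Hp1b s hs). lra. }
  assert (hdE : forall s, Rabs s <= d -> derivable_pt_lim E s (E s * ff p1 q2 dp1 s)).
  { intros s hs. apply dl_exp. apply HFd; exact hs. }
  assert (hdxi : forall s, Rabs s <= d -> derivable_pt_lim xi s (E s)).
  { intros s hs. unfold xi. eapply dl_eq.
    { apply dl_mult; [apply dG_lim; auto|apply hdE; exact hs]. }
    transitivity ((dGf p0 p1 q0 q1 q2 dp0 dp1 dq0 dq1 dq2 s
                            + Gf p0 p1 q0 q1 q2 s * ff p1 q2 dp1 s) * E s); [unfold G; ring|].
    rewrite (HGd s hs). ring. }
  assert (hxi1 : forall s, Rabs s <= d -> s ^ 2 / 2 <= s * xi s).
  { intros s hs. destruct (HGb s hs) as [h1 h2]. specialize (hE s hs).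
    unfold xi. fold G in h1. 
    replace (s * (G s * E s)) with ((s * G s) * E s) by ring.
    assert (0 <= s ^ 2) by nra. nra. }
  assert (hxi2 : forall s, Rabs s <= d -> Rabs (xi s) <= 2 * Rabs s).
  { intros s hs. destruct (HGb s hs) as [h1 h2]. specialize (hE s hs).
    unfold xi. fold G in h2. rewrite Rabs_mult, (Rabs_pos_eq (E s)) by lra.
    pose proof (Rabs_pos (G s)). pose proof (Rabs_pos s). nra. }
  assert (hxi0 : xi 0 = 0).
  { unfold xi, G, Gf. rewrite hp00, hq00. unfold Rdiv. ring. }
  destruct (inv_fun xi E d ltac:(lra)) as [X [HX [HL HdX]]].
  { intros x hx. apply hdxi. apply abs_le_intro; lra. }
  { intros x hx. assert (Rabs x <= d) by (apply abs_le_intro; lra).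
    specialize (hE x H). lra. }
  assert (hxid : d / 2 <= xi d).
  { assert (Rabs d <= d) by (rewrite Rabs_pos_eq; lra).
    specialize (hxi1 d H). nra. }
  assert (hximd : xi (-d) <= - d / 2).
  { assert (Rabs (-d) <= d) by (rewrite Rabs_Ropp, Rabs_pos_eq; lra).
    specialize (hxi1 (-d) H). nra. }
  exists (d / 32). split; [lra|].
  exists (2 * PI). split; [pose proof PI_RGT_0; lra|].
  intros a b hab.
  assert (ha : Rabs a <= d / 32).
  { apply abs_le_intro. split; nra. }
  assert (hb : Rabs b <= d / 32).
  { apply abs_le_intro. split; nra. }
  assert (ha' : Rabs a <= d) by lra.
  set (u0 := xi a). set (v0 := E a * (p0 a + p1 a * b)).
  assert (hu0 : Rabs u0 <= 2 * Rabs a) by (apply hxi2; exact ha').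
  assert (hv0 : Rabs v0 <= 4/3 * (Rabs a / 8 + 2 * Rabs b)).
  { unfold v0. rewrite Rabs_mult, (Rabs_pos_eq (E a)) by (specialize (hE a ha'); lra).
    specialize (hE a ha'). specialize (Hp0b a ha'). specialize (Hp1b a ha').
    assert (h1 : Rabs (p0 a + p1 a * b) <= Rabs a / 8 + 2 * Rabs b).
    { eapply Rle_trans; [apply Rabs_triang|]. rewrite Rabs_mult.
      assert (2 * a ^ 2 <= Rabs a / 8).
      { assert (a ^ 2 = Rabs a * Rabs a) by (rewrite <- Rabs_mult, Rabs_pos_eq; [ring|nra]).
        pose proof (Rabs_pos a). nra. }
      assert (Rabs (p1 a) <= 2) by (apply abs_le_intro; lra).
      pose proof (Rabs_pos b). pose proof (Rabs_pos (p1 a)). nra. }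
    pose proof (Rabs_pos (p0 a + p1 a * b)). nra. }
  set (u := fun t => u0 * cos t + v0 * sin t).
  set (v := fun t => - u0 * sin t + v0 * cos t).
  assert (hub : forall t, Rabs (u t) <= d / 4).
  { intros t. eapply Rle_trans; [apply abs_cs|].
    pose proof (Rabs_pos a). pose proof (Rabs_pos b). lra. }
  assert (huin : forall t, xi (-d) < u t < xi d).
  { intros t. specialize (hub t). apply abs_le in hub. lra. }
  set (xt := fun t => X (u t)).
  assert (hxt : forall t, Rabs (xt t) <= d / 2 /\ xi (xt t) = u t).
  { intros t. destruct (HX (u t) ltac:(specialize (huin t); lra)) as [h1 h2].
    fold (xt t) in h1, h2. split; [|exact h2].
    assert (Rabs (xt t) <= d) by (apply abs_le_intro; lra).
    specialize (hxi1 _ H). rewrite h2 in hxi1.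
    apply abs_x_le in hxi1. specialize (hub t). lra. }
  assert (hxtd : forall t, Rabs (xt t) <= d).
  { intros t. destruct (hxt t). lra. }
  set (yt := fun t => (v t / E (xt t) - p0 (xt t)) / p1 (xt t)).
  assert (hEne : forall t, E (xt t) <> 0).
  { intros t. specialize (hE _ (hxtd t)). lra. }
  assert (hvE : forall t, v t = E (xt t) * (p0 (xt t) + p1 (xt t) * yt t)).
  { intros t. unfold yt. field. split; [apply hEne|apply hp1ne, hxtd]. }
  assert (hdu : forall t, derivable_pt_lim u t (v t)).
  { intros t. unfold u, v. dauto. ring. }
  assert (hdv : forall t, derivable_pt_lim v t (- u t)).
  { intros t. unfold u, v. dauto. ring. }
  assert (hdx : forall t, derivable_pt_lim xt t (/ E (xt t) * v t)).
  { intros t. unfold xt. apply (dl_comp X u). apply hdu. apply HdX. apply huin. }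
  assert (hdEx : forall t, derivable_pt_lim (fun t => E (xt t)) t
                  (E (xt t) * ff p1 q2 dp1 (xt t) * (/ E (xt t) * v t))).
  { intros t. apply (dl_comp E xt). apply hdx. apply hdE. apply hxtd. }
  assert (hdp0 : forall t, derivable_pt_lim (fun t => p0 (xt t)) t (dp0 (xt t) * (/ E (xt t) * v t))).
  { intros t. apply (dl_comp p0 xt). apply hdx. apply Hp0. }
  assert (hdp1 : forall t, derivable_pt_lim (fun t => p1 (xt t)) t (dp1 (xt t) * (/ E (xt t) * v t))).
  { intros t. apply (dl_comp p1 xt). apply hdx. apply Hp1. }
  assert (hdy : forall t, derivable_pt_lim yt t
     (q0 (xt t) + q1 (xt t) * yt t + q2 (xt t) * yt t ^ 2)).
  { intros t. unfold yt. eapply dl_eq.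
    { apply dl_div; [apply dl_minus; [apply dl_div|]|apply hdp1|apply hp1ne, hxtd].
      - apply hdv.
      - apply hdEx.
      - apply hEne.
      - apply hdp0. }
    assert (hc := Hcond (xt t) (hp1ne _ (hxtd t))).
    assert (hux : u t = G (xt t) * E (xt t)) by (rewrite <- (proj2 (hxt t)); reflexivity).
    rewrite hux. unfold G, Gf, ff.
    set (X0 := xt t). set (Ev := E X0). set (P0 := p0 X0). set (P1 := p1 X0).
    set (Q0 := q0 X0). set (Q1 := q1 X0). set (Q2 := q2 X0).
    set (D0 := dp0 X0). set (D1 := dp1 X0). set (V := v t).
    assert (hc' : - D1 * P0 / P1 + Q1 + D0 - 2 * Q2 * P0 / P1 = 0) by exact hc.
    assert (hP1 : P1 <> 0) by (apply hp1ne, hxtd).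
    assert (hEv : Ev <> 0) by apply hEne.
    set (Y := (V / Ev - P0) / P1).
    transitivity (Q0 + Q1 * Y + Q2 * Y ^ 2 - (/ Ev * V) * (- D1 * P0 / P1 + Q1 + D0 - 2 * Q2 * P0 / P1) / P1).
    - unfold Y. field. split; assumption.
    - rewrite hc'. unfold Y. field. split; assumption. }
  exists xt, yt. split; [|split; [|split; [|split]]].
  - intros t. split.
    + eapply dl_eq; [apply hdx|]. rewrite (hvE t). field. apply hEne.
    + apply hdy.
  - unfold xt, u. rewrite cos_0, sin_0. replace (u0 * 1 + v0 * 0) with (xi a) by (unfold u0; ring).
    apply HL. apply abs_le. exact ha'.
  - unfold yt, xt, u, v. rewrite cos_0, sin_0.
    replace (u0 * 1 + v0 * 0) with (xi a) by (unfold u0; ring).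
    rewrite HL by (apply abs_le; exact ha').
    replace (- u0 * 0 + v0 * 1) with v0 by ring. unfold v0.
    field. split; [|apply hp1ne; exact ha']. specialize (hE a ha'). intro; lra.
  -
    assert (hu0v0 : 0 < u0 ^ 2 + v0 ^ 2).
    { destruct (Req_dec a 0) as [ea|na].
      - assert (b <> 0) by (intro eb; subst; nra).
        assert (u0 = 0) by (unfold u0; rewrite ea; exact hxi0).
        assert (v0 <> 0).
        { unfold v0. rewrite ea, hp00.
          assert (Rabs 0 <= d) by (rewrite Rabs_R0; lra).
          specialize (hE 0 H1). specialize (Hp1b 0 H1). 
          assert (p1 0 * b <> 0) by (apply Rmult_integral_contrapositive_currified; lra).
          rewrite Rplus_0_l. apply Rmult_integral_contrapositive_currified; lra. }
        nra.
      - assert (u0 <> 0).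
        { intro e. specialize (hxi1 a ha'). fold u0 in hxi1. rewrite e in hxi1. 
          assert (0 < a ^ 2) by (apply pow2_gt_0 || nra; auto). nra. }
        nra. }
    split; [pose proof PI_RGT_0; lra|]. split.
    + intros t. unfold yt, xt, u, v. rewrite cos_2PI_plus, sin_2PI_plus. split; reflexivity.
    + intros s hs e. injection e as e1 e2.
      assert (hs1 : u s = u 0).
      { rewrite <- (proj2 (hxt s)), <- (proj2 (hxt 0)). rewrite e1. reflexivity. }
      assert (hs2 : v s = v 0).
      { rewrite (hvE s), (hvE 0). rewrite e1, e2. reflexivity. }
      unfold u, v in hs1, hs2. rewrite cos_0, sin_0 in hs1, hs2.
      assert (cos s = 1).
      { apply (Rmult_eq_reg_l (u0 ^ 2 + v0 ^ 2)); [|lra].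
        transitivity (u0 * (u0 * cos s + v0 * sin s) + v0 * (- u0 * sin s + v0 * cos s)); [ring|].
        rewrite hs1, hs2. ring. }
      apply (cos_ne1 s); auto.
  -
    assert (hu0v0 : 0 < u0 ^ 2 + v0 ^ 2).
    { destruct (Req_dec a 0) as [ea|na].
      - assert (b <> 0) by (intro eb; subst; nra).
        assert (u0 = 0) by (unfold u0; rewrite ea; exact hxi0).
        assert (v0 <> 0).
        { unfold v0. rewrite ea, hp00.
          assert (Rabs 0 <= d) by (rewrite Rabs_R0; lra).
          specialize (hE 0 H1). specialize (Hp1b 0 H1). 
          assert (p1 0 * b <> 0) by (apply Rmult_integral_contrapositive_currified; lra).
          rewrite Rplus_0_l. apply Rmult_integral_contrapositive_currified; lra. }
        nra.
      - assert (u0 <> 0).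
        { intro e. specialize (hxi1 a ha'). fold u0 in hxi1. rewrite e in hxi1. nra. }
        nra. }
    assert (huv : forall t, u t ^ 2 + v t ^ 2 = u0 ^ 2 + v0 ^ 2).
    { intros t. unfold u, v. pose proof (trig1 t). nra. }
    assert (hnz : forall t, 0 < xt t ^ 2 + yt t ^ 2).
    { intros t. destruct (Req_dec (xt t) 0) as [ex|nx].
      - destruct (Req_dec (yt t) 0) as [ey|ny].
        + exfalso. assert (u t = 0) by (rewrite <- (proj2 (hxt t)), ex; exact hxi0).
          assert (v t = 0) by (rewrite (hvE t), ex, ey, hp00; ring).
          specialize (huv t). nra.
        + nra.
      - nra. }
    split.
    + intros t. specialize (hnz t). lra.
    + destruct (polar u0 v0 hu0v0) as [phi [hph1 hph2]].
      set (rho := sqrt (u0 ^ 2 + v0 ^ 2)) in *.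
      assert (hrho : 0 < rho) by (apply sqrt_lt_R0; lra).
      apply (lift xt yt phi).
      * intros t. apply derivable_continuous_pt. eexists. apply hdx.
      * intros t. apply derivable_continuous_pt. eexists. apply hdy.
      * intros t.
        assert (hc : rho * cos (t - phi) = u t).
        { unfold u. rewrite hph1, hph2, cos_minus. ring. }
        assert (hsn : rho * sin (t - phi) = - v t).
        { unfold v. rewrite hph1, hph2, sin_minus. ring. }
        apply (Rmult_lt_reg_l rho); [exact hrho|]. rewrite Rmult_0_r.
        replace (rho * (xt t * cos (t - phi) + yt t * sin (t - phi)))
          with (xt t * (rho * cos (t - phi)) + yt t * (rho * sin (t - phi))) by ring.
        rewrite hc, hsn.
        rewrite <- (proj2 (hxt t)), (hvE t).
        replace (xt t * xi (xt t) + yt t * - (E (xt t) * (p0 (xt t) + p1 (xt t) * yt t)))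
          with (xt t * xi (xt t) - yt t * (E (xt t) * (p0 (xt t) + p1 (xt t) * yt t))) by ring.
        apply pos_bound.
        -- destruct (hxt t). lra.
        -- apply hE, hxtd.
        -- apply Hp1b, hxtd.
        -- apply Hp0b, hxtd.
        -- apply hxi1, hxtd.
        -- apply hnz.
      * intros t. unfold yt, xt, u, v. rewrite cos_2PI_plus, sin_2PI_plus. split; reflexivity.
Qed.


Lemma gen_all (P Q : R -> R -> R) p0 p1 q0 q1 q2 dp0 dp1 dq0 dq1 dq2 Fe d :
  (forall x y, P x y = p0 x + p1 x * y) ->
  (forall x y, Q x y = q0 x + q1 x * y + q2 x * y ^ 2) ->
  0 < d <= 1/16 ->
  (forall x, derivable_pt_lim p0 x (dp0 x)) ->
  (forall x, derivable_pt_lim p1 x (dp1 x)) ->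
  (forall x, derivable_pt_lim q0 x (dq0 x)) ->
  (forall x, derivable_pt_lim q1 x (dq1 x)) ->
  (forall x, derivable_pt_lim q2 x (dq2 x)) ->
  (forall x, p1 x <> 0 -> - dp1 x * p0 x / p1 x + q1 x + dp0 x - 2 * q2 x * p0 x / p1 x = 0) ->
  p0 0 = 0 -> q0 0 = 0 -> Fe 0 = 0 ->
  (forall x, Rabs x <= d -> derivable_pt_lim Fe x (ff p1 q2 dp1 x)) ->
  (forall x, Rabs x <= d -> continuity_pt (ff p1 q2 dp1) x) ->
  (forall x, Rabs x <= d -> dGf p0 p1 q0 q1 q2 dp0 dp1 dq0 dq1 dq2 x
                            + Gf p0 p1 q0 q1 q2 x * ff p1 q2 dp1 x = 1) ->
  (forall x, Rabs x <= d -> -2 <= p1 x <= -1/2) ->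
  (forall x, Rabs x <= d -> Rabs (p0 x) <= 2 * x ^ 2) ->
  (forall x, Rabs x <= d -> Rabs (Fe x) <= 1/4) ->
  (forall x, Rabs x <= d -> 2/3 * x ^ 2 <= x * Gf p0 p1 q0 q1 q2 x
       /\ Rabs (Gf p0 p1 q0 q1 q2 x) <= 3/2 * Rabs x) ->
  iso_center_zero_Urabe P Q.
Proof.
  intros HP HQ hd Hp0 Hp1 Hq0 Hq1 Hq2 Hcond hp00 hq00 hF0 HFd Hfc HGd Hp1b Hp0b HFb HGb.
  assert (eP : P = fun x y => p0 x + p1 x * y).
  { apply functional_extensionality; intro x; apply functional_extensionality; intro y; apply HP. }
  assert (eQ : Q = fun x y => q0 x + q1 x * y + q2 x * y ^ 2).
  { apply functional_extensionality; intro x; apply functional_extensionality; intro y; apply HQ. }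
  split.
  - rewrite eP, eQ. eapply gen_iso; eauto.
  - exists p0, p1, q0, q1, q2. split; [exact HP|]. split; [exact HQ|].
    split; [exact hp00|]. split; [exact hq00|].
    split.
    + assert (Rabs 0 <= d) by (rewrite Rabs_R0; lra). specialize (Hp1b 0 H). lra.
    + eapply gen_urabe with (d := d); eauto; try lra.
      * intros x hx. specialize (Hp1b x hx). lra.
      * intros x hx. apply HGb; exact hx.
Qed.

Lemma small_param b x : Rabs x <= / (16 * (1 + b^2)) -> Rabs (b * x) <= 1/32.
Proof.
  intros h. rewrite Rabs_mult.
  assert (hp : 0 < 16 * (1 + b^2)) by nra.
  assert (2 * Rabs b <= 1 + b^2).
  { assert (b^2 = Rabs b * Rabs b) by (rewrite <- Rabs_mult, Rabs_pos_eq; [ring|nra]).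
    pose proof (pow2_ge_0 (Rabs b - 1)). nra. }
  apply Rle_trans with (Rabs b * / (16 * (1 + b^2))).
  - apply Rmult_le_compat_l; [apply Rabs_pos|exact h].
  - apply (Rmult_le_reg_r (16 * (1 + b^2))); [exact hp|].
    rewrite Rmult_assoc, Rinv_l by lra. lra.
Qed.

Lemma d_param b : 0 < / (16 * (1 + b^2)) <= 1/16.
Proof.
  assert (hp : 0 < 16 * (1 + b^2)) by nra. split.
  - apply Rinv_0_lt_compat; exact hp.
  - apply (Rmult_le_reg_r (16 * (1 + b^2))); [exact hp|].
    rewrite Rinv_l by lra. nra.
Qed.

Lemma pw k r n : Rabs k <= r -> - r^n <= k^n <= r^n.
Proof.
  intros h. apply abs_le. rewrite <- RPow_abs. apply pow_incr. split; [apply Rabs_pos|exact h].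
Qed.

Lemma ln_bound w : 1/2 <= w -> Rabs (ln w) <= 2 * Rabs (w - 1).
Proof.
  intros hw. apply abs_le_intro.
  pose proof (exp_ineq1_le (ln w)). rewrite exp_ln in H by lra.
  pose proof (exp_ineq1_le (- ln w)). rewrite exp_Ropp, exp_ln in H0 by lra.
  assert (1 - ln w <= / w) by lra.
  apply (Rmult_le_compat_r w) in H1; [|lra]. rewrite Rinv_l in H1 by lra.
  assert (hl : (w - 1) <= ln w * w) by nra.
  unfold Rabs; destruct (Rcase_abs (w - 1)); split; try lra.
  - nra.
  - assert (0 <= ln w * w) by lra.
    assert (0 <= ln w) by nra. lra.
Qed.

Lemma Gbound x h : 2/3 <= h <= 3/2 -> 2/3 * x^2 <= x*(x*h) /\ Rabs (x*h) <= 3/2 * Rabs x.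
Proof.
  intros hh. split.
  - assert (0 <= x^2) by nra. nra.
  - rewrite Rabs_mult, (Rabs_pos_eq h) by lra. pose proof (Rabs_pos x). nra.
Qed.

Lemma ratio_bound N D : 0 < D -> 2/3 * D <= N <= 3/2 * D -> 2/3 <= N/D <= 3/2.
Proof.
  intros hD h. split.
  - apply (Rmult_le_reg_r D); [exact hD|]. replace (N / D * D) with N by (field; lra). lra.
  - apply (Rmult_le_reg_r D); [exact hD|]. replace (N / D * D) with N by (field; lra). lra.
Qed.

Lemma lnc_bound c w r : 1/2 <= w -> Rabs (w - 1) <= r -> Rabs (c * ln w) <= 2 * Rabs c * r.
Proof.
  intros hw hr. rewrite Rabs_mult. pose proof (ln_bound w hw).
  pose proof (Rabs_pos c). pose proof (Rabs_pos (ln w)). nra.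
Qed.


Ltac dfin := cbv beta in *; simpl; try lra; try (intro; lra).

Lemma sys1 b : iso_center_zero_Urabe (P1 b) (Q1 b).
Proof.
  pose proof (d_param b) as hd.
  set (d := / (16 * (1 + b^2))) in *.
  apply (gen_all (P1 b) (Q1 b)
   (fun x => x^2 - b/3*x^3) (fun x => -1 + b/3*x)
   (fun x => x - b/3*x^2 + (b^2/27+2)*x^3 + b/3*x^4) (fun x => -2*x - 4*b/3*x^2) (fun _ => b)
   (fun x => 2*x - b*x^2) (fun _ => b/3)
   (fun x => 1 - 2*b/3*x + 3*(b^2/27+2)*x^2 + 4*b/3*x^3) (fun x => -2 - 8*b/3*x) (fun _ => 0)
   (fun x => -4 * ln (1 - b*x/3)) d).
  - intros x y. unfold P1. ring.
  - intros x y. unfold Q1. ring.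
  - lra.
  - intros x. dauto; dfin; field.
  - intros x. dauto; dfin; field.
  - intros x. dauto; dfin; field.
  - intros x. dauto; dfin; field.
  - intros x. dauto; dfin.
  - intros x hx. field. intro; apply hx; lra.
  - ring.
  - ring.
  - replace (1 - b * 0 / 3) with 1 by field. rewrite ln_1. ring.
  - intros x hx. cbv beta. pose proof (abs_le _ _ (small_param b x hx)) as hk.
    unfold ff. dauto; dfin; field. lra.
  - intros x hx. cbv beta. pose proof (abs_le _ _ (small_param b x hx)) as hk.
    unfold ff. apply derivable_continuous_pt. eexists. dauto; dfin; reflexivity.
  - intros x hx. cbv beta. pose proof (abs_le _ _ (small_param b x hx)) as hk.
    unfold dGf, Gf, ff. field. lra.
  - intros x hx. cbv beta. pose proof (abs_le _ _ (small_param b x hx)) as hk. nra.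
  - intros x hx. cbv beta. pose proof (abs_le _ _ (small_param b x hx)) as hk.
    replace (x ^ 2 - b / 3 * x ^ 3) with (x^2 * (1 - b * x / 3)) by field.
    rewrite Rabs_mult, (Rabs_pos_eq (x^2)) by nra.
    assert (Rabs (1 - b * x / 3) <= 2) by (apply abs_le_intro; lra).
    assert (0 <= x^2) by nra. nra.
  - intros x hx. cbv beta. pose proof (small_param b x hx) as hk'. pose proof (abs_le _ _ hk') as hk.
    eapply Rle_trans; [apply (lnc_bound (-4) (1 - b * x / 3) (1/96)); [lra|apply abs_le_intro; lra]|].
    replace (Rabs (-4)) with 4 by (unfold Rabs; destruct (Rcase_abs (-4)); lra). lra.
  - intros x hx. cbv beta. pose proof (small_param b x hx) as hk'. pose proof (abs_le _ _ hk') as hk.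
    set (k := b * x) in *.
    assert (e : Gf (fun x => x^2 - b/3*x^3) (fun x => -1 + b/3*x)
       (fun x => x - b/3*x^2 + (b^2/27+2)*x^3 + b/3*x^4) (fun x => -2*x - 4*b/3*x^2) (fun _ => b) x
       = x * ((1 - k + 10/27 * k^2 - 5/81 * k^3 + 1/243 * k^4) / (1 - k/3))).
    { unfold Gf, k. field. unfold k in hk. repeat split; intro; lra. }
    rewrite e. apply Gbound. apply ratio_bound; [lra|].
    pose proof (pw k (1/32) 2 hk'). pose proof (pw k (1/32) 3 hk'). pose proof (pw k (1/32) 4 hk').
    simpl in *. lra.
Qed.



Lemma sys2 b : iso_center_zero_Urabe (P2 b) (Q2 b).
Proof.
  pose proof (d_param b) as hd.
  set (d := / (16 * (1 + b^2))) in *.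
  apply (gen_all (P2 b) (Q2 b)
   (fun x => x^2 - b/4*x^3) (fun x => -1 + b/4*x)
   (fun x => x - 3*b/8*x^2 + (b^2/16+2)*x^3 + (-b^3/256 + b/2)*x^4) (fun x => -2*x - 3*b/2*x^2) (fun _ => b)
   (fun x => 2*x - 3*b/4*x^2) (fun _ => b/4)
   (fun x => 1 - 3*b/4*x + 3*(b^2/16+2)*x^2 + 4*(-b^3/256 + b/2)*x^3) (fun x => -2 - 3*b*x) (fun _ => 0)
   (fun x => -5 * ln (1 - b*x/4)) d).
  - intros x y. unfold P2. ring.
  - intros x y. unfold Q2. ring.
  - lra.
  - intros x. dauto; dfin; field.
  - intros x. dauto; dfin; field.
  - intros x. dauto; dfin; field.
  - intros x. dauto; dfin; field.
  - intros x. dauto; dfin.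
  - intros x hx. field. intro; apply hx; lra.
  - ring.
  - ring.
  - replace (1 - b * 0 / 4) with 1 by field. rewrite ln_1. ring.
  - intros x hx. cbv beta. pose proof (abs_le _ _ (small_param b x hx)) as hk.
    unfold ff. dauto; dfin; field. lra.
  - intros x hx. cbv beta. pose proof (abs_le _ _ (small_param b x hx)) as hk.
    unfold ff. apply derivable_continuous_pt. eexists. dauto; dfin; reflexivity.
  - intros x hx. cbv beta. pose proof (abs_le _ _ (small_param b x hx)) as hk.
    unfold dGf, Gf, ff. field. lra.
  - intros x hx. cbv beta. pose proof (abs_le _ _ (small_param b x hx)) as hk. nra.
  - intros x hx. cbv beta. pose proof (abs_le _ _ (small_param b x hx)) as hk.
    replace (x ^ 2 - b / 4 * x ^ 3) with (x^2 * (1 - b * x / 4)) by field.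
    rewrite Rabs_mult, (Rabs_pos_eq (x^2)) by nra.
    assert (Rabs (1 - b * x / 4) <= 2) by (apply abs_le_intro; lra).
    assert (0 <= x^2) by nra. nra.
  - intros x hx. cbv beta. pose proof (small_param b x hx) as hk'. pose proof (abs_le _ _ hk') as hk.
    eapply Rle_trans; [apply (lnc_bound (-5) (1 - b * x / 4) (1/128)); [lra|apply abs_le_intro; lra]|].
    replace (Rabs (-5)) with 5 by (unfold Rabs; destruct (Rcase_abs (-5)); lra). lra.
  - intros x hx. cbv beta. pose proof (small_param b x hx) as hk'. pose proof (abs_le _ _ hk') as hk.
    set (k := b * x) in *.
    assert (e : Gf (fun x => x^2 - b/4*x^3) (fun x => -1 + b/4*x)
       (fun x => x - 3*b/8*x^2 + (b^2/16+2)*x^3 + (-b^3/256 + b/2)*x^4) (fun x => -2*x - 3*b/2*x^2) (fun _ => b) x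
       = x * ((1 - 7/8 * k + 5/16 * k^2 - 15/256 * k^3 + 3/512 * k^4 - 1/4096 * k^5) / (1 - k/4))).
    { unfold Gf, k. field. unfold k in hk. repeat split; intro; lra. }
    rewrite e. apply Gbound. apply ratio_bound; [lra|].
    pose proof (pw k (1/32) 2 hk'). pose proof (pw k (1/32) 3 hk'). pose proof (pw k (1/32) 4 hk'). pose proof (pw k (1/32) 5 hk').
    simpl in *. lra.
Qed.



Lemma sys3 : iso_center_zero_Urabe P3 Q3.
Proof.
  apply (gen_all P3 Q3
   (fun x => x^2 + 45/8*x^4) (fun x => -1 - 45/8*x^2)
   (fun x => x + 19/2*x^3) (fun x => -2*x + 45*x^3) (fun x => -225/8*x)
   (fun x => 2*x + 45/2*x^3) (fun x => -45/4*x)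
   (fun x => 1 + 57/2*x^2) (fun x => -2 + 135*x^2) (fun _ => -225/8)
   (fun x => -7/2 * ln (1 + 45/8*x^2)) (1/16)).
  - intros x y. unfold P3. field.
  - intros x y. unfold Q3. field.
  - lra.
  - intros x. dauto; dfin; field.
  - intros x. dauto; dfin; field.
  - intros x. dauto; dfin; field.
  - intros x. dauto; dfin; field.
  - intros x. dauto; dfin; field.
  - intros x hx. field. intro; apply hx; lra.
  - ring.
  - ring.
  - replace (1 + 45/8 * 0^2) with 1 by field. rewrite ln_1. ring.
  - intros x hx. cbv beta. pose proof (abs_le _ _ hx) as hk.
    assert (0 <= x^2) by nra.
    unfold ff. dauto; dfin; try nra. field. nra.
  - intros x hx. cbv beta. pose proof (abs_le _ _ hx) as hk. assert (0 <= x^2) by nra.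
    unfold ff. apply derivable_continuous_pt. eexists. dauto; dfin; try (intro; nra). reflexivity.
  - intros x hx. cbv beta. pose proof (abs_le _ _ hx) as hk. assert (0 <= x^2) by nra.
    unfold dGf, Gf, ff. field. nra.
  - intros x hx. cbv beta. pose proof (pw x (1/16) 2 hx). simpl in *. lra.
  - intros x hx. cbv beta. pose proof (pw x (1/16) 2 hx).
    replace (x ^ 2 + 45/8 * x ^ 4) with (x^2 * (1 + 45/8 * x^2)) by field.
    rewrite Rabs_mult, (Rabs_pos_eq (x^2)) by nra.
    assert (Rabs (1 + 45/8 * x^2) <= 2) by (apply abs_le_intro; simpl in *; lra).
    assert (0 <= x^2) by nra. nra.
  - intros x hx. cbv beta. pose proof (pw x (1/16) 2 hx). simpl in H.
    eapply Rle_trans; [apply (lnc_bound (-7/2) (1 + 45/8 * x^2) (1/40)); [simpl; lra|apply abs_le_intro; simpl; lra]|].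
    replace (Rabs (-7/2)) with (7/2) by (unfold Rabs; destruct (Rcase_abs (-7/2)); lra). lra.
  - intros x hx. cbv beta. pose proof (abs_le _ _ hx) as hk. assert (0 <= x^2) by nra.
    assert (e : Gf (fun x => x^2 + 45/8*x^4) (fun x => -1 - 45/8*x^2)
       (fun x => x + 19/2*x^3) (fun x => -2*x + 45*x^3) (fun x => -225/8*x) x
       = x * ((1 + 75/4 * x^2 + 8505/64 * x^4 + 54675/128 * x^6 + 273375/512 * x^8) / (1 + 45/8 * x^2))).
    { unfold Gf. field. repeat split; intro; nra. }
    rewrite e. apply Gbound.
    pose proof (pw x (1/16) 2 hx). pose proof (pw x (1/16) 4 hx).
    pose proof (pw x (1/16) 6 hx). pose proof (pw x (1/16) 8 hx). simpl in *.
    apply ratio_bound; lra.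
Qed.



Lemma Rabs_minus_le2 A B : Rabs (A - B) <= Rabs A + Rabs B.
Proof. unfold Rminus. eapply Rle_trans; [apply Rabs_triang|]. rewrite Rabs_Ropp. lra. Qed.

Lemma sys4 c : iso_center_zero_Urabe (P4 c) (Q4 c).
Proof.
  pose proof (d_param c) as hd.
  set (d := / (16 * (1 + c^2))) in *.
  assert (hr2 : sqrt 2 * sqrt 2 = 2) by (apply sqrt_sqrt; lra).
  assert (hr0 : 0 <= sqrt 2) by apply sqrt_pos.
  assert (hr1 : 1 < sqrt 2) by nra.
  assert (hr3 : sqrt 2 < 3/2) by nra.
  apply (gen_all (P4 c) (Q4 c)
   (fun x => x^2 - c^2/2*x^4) (fun x => -1 + c^2/2*x^2)
   (fun x => x - c/2*x^2 + 2*x^3 + c*x^4) (fun x => -2*x - 2*c*x^2 - c^2*x^3) (fun x => c + c^2*x)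
   (fun x => 2*x - 2*c^2*x^3) (fun x => c^2*x)
   (fun x => 1 - c*x + 6*x^2 + 4*c*x^3) (fun x => -2 - 4*c*x - 3*c^2*x^2) (fun _ => c^2)
   (fun x => sqrt 2 / 2 * (ln (1 + c / sqrt 2 * x) - ln (1 - c / sqrt 2 * x))
              - 2 * ln ((1 + c / sqrt 2 * x) * (1 - c / sqrt 2 * x))) d).
  - intros x y. unfold P4. field.
  - intros x y. unfold Q4. field.
  - lra.
  - intros x. dauto; dfin; field.
  - intros x. dauto; dfin; field.
  - intros x. dauto; dfin; field.
  - intros x. dauto; dfin; field.
  - intros x. dauto; dfin; field.
  - intros x hx. field. intro; apply hx; lra.
  - ring.
  - ring.
  - replace (1 + c / sqrt 2 * 0) with 1 by (field; lra). replace (1 - c / sqrt 2 * 0) with 1 by (field; lra).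
    rewrite Rmult_1_l, ln_1. ring.
  - intros x hx. cbv beta. pose proof (abs_le _ _ (small_param c x hx)) as hk.
    set (r := sqrt 2) in *. set (a := c / r).
    assert (hax : Rabs (a * x) <= 1/32).
    { unfold a. apply abs_le_intro.
      replace (c / r * x) with ((c * x) / r) by (field; lra).
      split; [apply (Rmult_le_reg_r r); [lra|] | apply (Rmult_le_reg_r r); [lra|]];
      replace (c * x / r * r) with (c * x) by (field; lra); nra. }
    apply abs_le in hax.
    unfold ff. dauto; dfin; try nra.
    assert (hc : c = a * r) by (unfold a; field; lra).
    rewrite hc. replace (a * r * (a * r * 1)) with (2 * a^2) by (rewrite <- hr2; ring).
    clearbody a r. field. repeat split; intro; nra.
  - intros x hx. cbv beta. pose proof (abs_le _ _ (small_param c x hx)) as hk.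
    unfold ff. apply derivable_continuous_pt. eexists. dauto; dfin; try (intro; nra). reflexivity.
  - intros x hx. cbv beta. pose proof (abs_le _ _ (small_param c x hx)) as hk.
    unfold dGf, Gf, ff. field. nra.
  - intros x hx. cbv beta. pose proof (abs_le _ _ (small_param c x hx)) as hk. nra.
  - intros x hx. cbv beta. pose proof (abs_le _ _ (small_param c x hx)) as hk.
    replace (x ^ 2 - c^2/2 * x ^ 4) with (x^2 * (1 - (c * x)^2/2)) by field.
    rewrite Rabs_mult, (Rabs_pos_eq (x^2)) by nra.
    assert (Rabs (1 - (c*x)^2/2) <= 2) by (apply abs_le_intro; nra).
    assert (0 <= x^2) by nra. nra.
  - intros x hx. cbv beta. pose proof (abs_le _ _ (small_param c x hx)) as hk.
    set (r := sqrt 2) in *.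
    assert (hax : Rabs (c / r * x) <= 1/32).
    { apply abs_le_intro.
      replace (c / r * x) with ((c * x) / r) by (field; lra).
      split; [apply (Rmult_le_reg_r r); [lra|] | apply (Rmult_le_reg_r r); [lra|]];
      replace (c * x / r * r) with (c * x) by (field; lra); nra. }
    pose proof (abs_le _ _ hax) as hax'.
    eapply Rle_trans; [apply Rabs_minus_le2|].
    rewrite Rabs_mult. rewrite (Rabs_pos_eq (r/2)) by lra.
    pose proof (lnc_bound 1 (1 + c / r * x) (1/32) ltac:(lra) ltac:(apply abs_le_intro; lra)) as L1.
    pose proof (lnc_bound 1 (1 - c / r * x) (1/32) ltac:(lra) ltac:(apply abs_le_intro; lra)) as L2.
    pose proof (lnc_bound 2 ((1 + c / r * x) * (1 - c / r * x)) (1/1000) ltac:(nra) ltac:(apply abs_le_intro; nra)) as L3.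
    rewrite !Rmult_1_l, Rabs_R1 in L1, L2. rewrite (Rabs_pos_eq 2) in L3 by lra.
    pose proof (Rabs_minus_le2 (ln (1 + c / r * x)) (ln (1 - c / r * x))).
    pose proof (Rabs_pos (ln (1 + c / r * x) - ln (1 - c / r * x))).
    nra.
  - intros x hx. cbv beta. pose proof (small_param c x hx) as hk'. pose proof (abs_le _ _ hk') as hk.
    assert (e : Gf (fun x => x^2 - c^2/2*x^4) (fun x => -1 + c^2/2*x^2)
       (fun x => x - c/2*x^2 + 2*x^3 + c*x^4) (fun x => -2*x - 2*c*x^2 - c^2*x^3) (fun x => c + c^2*x) x
       = x * ((1 - (c*x)^2/2) * (1 - (c*x)/2))).
    { unfold Gf. field. intro; nra. }
    rewrite e. apply Gbound.
    pose proof (pw (c*x) (1/32) 2 hk'). pose proof (pw (c*x) (1/32) 3 hk'). simpl in *.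
    split; nra.
Qed.


Theorem theorem4p2 (b c : R) :
  iso_center_zero_Urabe (P1 b) (Q1 b) /\
  iso_center_zero_Urabe (P2 b) (Q2 b) /\
  iso_center_zero_Urabe P3 Q3 /\
  iso_center_zero_Urabe (P4 c) (Q4 c).
Proof.
  split; [apply sys1|]. split; [apply sys2|]. split; [apply sys3|]. apply sys4.
Qed.
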